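(* Let $A\in\mathbb{R}^{m\times m}$ be positive definite, $B\in\mathbb{R}^{m\times n}$ ($n\le m$), $\alpha\ge0$, $\beta>0$, and let $(\lambda,(u^*,v^* )^* )$ be an eigenpair of $\mathcal{P}_{MGSSP}^{-1}\mathcal{A}$ with $u\in\mathbb{C}^m$, $v\in\mathbb{C}^n$. (i) If $B$ has full column rank and $B^Tu=0$, then $$\frac{\lambda_{\min}(H)(\alpha+2\lambda_{\min}(H))}{(\alpha+2\rho(H))^2+4\rho(S)^2}\le \operatorname{Re}(\lambda)\le\frac{\rho(H)(\alpha+2\rho(H))+2\rho(S)^2}{(\alpha+2\lambda_{\min}(H))^2},\qquad |\operatorname{Im}(\lambda)|\le\frac{\alpha\rho(S)}{(\alpha+2\lambda_{\min}(H))^2}.\quad(\ast)$$ (ii) If $B$ is rank deficient and $u=0$, then $\lambda=0$. (iii) If $B$ is rank deficient and $B^Tu=0$, then either $\lambda=0$ or $\lambda$ satisfies the inequalities $(\ast)$.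
   Context: A real square matrix $A$ is called positive definite if $x^TAx>0$ for all nonzero $x\in\mathbb{R}^m$ ($A$ need not be symmetric). $H=\frac12(A+A^T)$, $S=\frac12(A-A^T)$. $\mathcal{A}=\begin{pmatrix}A & B\\ -B^T & 0\end{pmatrix}$ and, for $\alpha\ge0,\beta>0$, $\mathcal{P}_{MGSSP}=\begin{pmatrix}\alpha I+2A & 2B\\ -2B^T & \beta I\end{pmatrix}$. $\lambda_{\min}(\cdot)$ is the smallest eigenvalue of a symmetric matrix and $\rho(\cdot)$ the spectral radius. *)

(* Defs.v *)
(* Real matrices are modelled as matrices over a numeric
   closed field C (e.g. algC, the complex algebraic numbers) whose entries
   are all real; eigenvectors/eigenvalues live in C. *)
From HB Require Import structures.
From mathcomp Require Import all_boot all_order all_algebra.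
Set Implicit Arguments. Unset Strict Implicit. Unset Printing Implicit Defensive.
Import Order.TTheory GRing.Theory Num.Theory.
Local Open Scope ring_scope.

Section Spectral.
Variable C : numClosedFieldType.

Definition eigs (k : nat) (M : 'M[C]_k) : seq C :=
  sval (closed_field_poly_normal (char_poly M)).

Definition spectral_radius (k : nat) (M : 'M[C]_k) : C :=
  \big[Num.max/0]_(z <- eigs M) `|z|.

(* smallest eigenvalue of a symmetric real matrix (whose spectrum is real) *)
Definition lambda_min (k : nat) (M : 'M[C]_k) : C :=
  \big[Num.min/head 0 (eigs M)]_(z <- eigs M) z.

Definition real_mx (p q : nat) (M : 'M[C]_(p, q)) : Prop :=
  forall i j, M i j \is Num.real.

(* positive definite (not necessarily symmetric): x^T A x > 0 for all
   nonzero real x *)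
Definition pos_def (k : nat) (A : 'M[C]_k) : Prop :=
  forall x : 'cV[C]_k, real_mx x -> x != 0 -> 0 < (x^T *m A *m x) 0 0.

Definition symm_part (k : nat) (A : 'M[C]_k) : 'M[C]_k := 2^-1 *: (A + A^T).
Definition skew_part (k : nat) (A : 'M[C]_k) : 'M[C]_k := 2^-1 *: (A - A^T).

Definition saddle_mx (m n : nat) (A : 'M[C]_m) (B : 'M[C]_(m, n)) : 'M[C]_(m + n) :=
  block_mx A B (- B^T) 0.

Definition P_MGSSP (m n : nat) (alpha beta : C) (A : 'M[C]_m) (B : 'M[C]_(m, n))
  : 'M[C]_(m + n) :=
  block_mx (alpha%:M + 2 *: A) (2 *: B) (- (2 *: B^T)) (beta%:M).

End Spectral.

(* Main.v *)
Set Warnings "-notation-overridden,-ambiguous-paths,-deprecated".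
Require Import Defs.
From HB Require Import structures.
From mathcomp Require Import all_boot all_order all_algebra.
From mathcomp Require Import ring lra.
Import Order.TTheory GRing.Theory Num.Theory.
Local Open Scope ring_scope.
Set Implicit Arguments. Unset Strict Implicit. Unset Printing Implicit Defensive.
Section Aux.
Variable C : numClosedFieldType.

Lemma bigmax_norm (s : seq C) :
  0 <= \big[Num.max/0]_(z <- s) `|z| /\
  forall x, x \in s -> `|x| <= \big[Num.max/0]_(z <- s) `|z|.
Proof.
elim: s => [|a s [IH0 IH]]; first by rewrite big_nil.
rewrite big_cons.
have ra : `|a| \is Num.real by rewrite realE normr_ge0.
have rb : \big[Num.max/0]_(z <- s) `|z| \is Num.real by rewrite realE IH0.
case: (real_leP ra rb) => h.
  split=> // x; rewrite inE => /orP[/eqP->//|]; exact: IH.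
split; first exact: normr_ge0.
move=> x; rewrite inE => /orP[/eqP->//|/IH hx].
exact: le_trans hx (ltW h).
Qed.

Lemma bigmin_le (s : seq C) (d : C) :
  d \is Num.real -> (forall z, z \in s -> z \is Num.real) ->
  \big[Num.min/d]_(z <- s) z \is Num.real /\
  forall x, x \in s -> \big[Num.min/d]_(z <- s) z <= x.
Proof.
move=> rd; elim: s => [|a s IH] hs; first by rewrite big_nil.
have [IH0 IH1] := IH (fun z hz => hs z (mem_behead (s:=a::s) hz)).
have ra : a \is Num.real by apply: hs; rewrite mem_head.
rewrite big_cons.
case: (real_leP ra IH0) => h.
  split=> // x; rewrite inE => /orP[/eqP->//|/IH1 hx].
  exact: le_trans h hx.
split=> // x; rewrite inE => /orP[/eqP->|]; [exact: ltW|exact: IH1].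
Qed.

Lemma bigmin_gt0 (s : seq C) (d : C) :
  0 < d -> (forall z, z \in s -> 0 < z) -> 0 < \big[Num.min/d]_(z <- s) z.
Proof.
move=> hd; elim: s => [|a s IH] hs; first by rewrite big_nil.
have IH0 := IH (fun z hz => hs z (mem_behead (s:=a::s) hz)).
have ha : 0 < a by apply: hs; rewrite mem_head.
rewrite big_cons.
have ra : a \is Num.real by rewrite realE ltW.
have rb : \big[Num.min/d]_(z <- s) z \is Num.real by rewrite realE ltW.
by case: (real_leP ra rb).
Qed.

End Aux.
Section QF.
Variable C : numClosedFieldType.

Definition bf k (M : 'M[C]_k) (X Y : 'cV[C]_k) : C := (X^T *m M *m Y) 0 0.
Definition conjv k (u : 'cV[C]_k) : 'cV[C]_k := \col_i (u i 0)^*.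
Definition qf k (M : 'M[C]_k) (u : 'cV[C]_k) : C := bf M (conjv u) u.

Lemma bfE k (M : 'M[C]_k) X Y :
  bf M X Y = \sum_i \sum_j X i 0 * M i j * Y j 0.
Proof.
rewrite /bf mxE exchange_big /=; apply: eq_bigr => j _.
rewrite mxE mulr_suml; apply: eq_bigr => i _; by rewrite mxE.
Qed.

Lemma qfE k (M : 'M[C]_k) u :
  qf M u = \sum_i \sum_j (u i 0)^* * M i j * u j 0.
Proof. by rewrite /qf bfE; apply: eq_bigr => i _; apply: eq_bigr => j _; rewrite mxE. Qed.

Lemma qf_tr k (M : 'M[C]_k) u : real_mx M -> qf M^T u = (qf M u)^*.
Proof.
move=> rM; rewrite !qfE rmorph_sum exchange_big /=; apply: eq_bigr => i _.
rewrite rmorph_sum; apply: eq_bigr => j _.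
rewrite mxE !rmorphM /= conjCK; rewrite (conj_Creal (rM i j)).

ring.
Qed.

Lemma qf_lin k (M N : 'M[C]_k) (c d : C) u :
  qf (c *: M + d *: N) u = c * qf M u + d * qf N u.
Proof.
rewrite !qfE !mulr_sumr -big_split /=; apply: eq_bigr => i _.
rewrite !mulr_sumr -big_split /=; apply: eq_bigr => j _.
rewrite !mxE; ring.
Qed.

End QF.
Section Pos.
Variable C : numClosedFieldType.

Lemma scal_id (I a b c d e : C) : I ^+ 2 = -1 ->
  (a - I * b) * e * (c + I * d) = e * (a * c + b * d) + I * (e * (a * d - b * c)).
Proof.
move=> hI.
have -> : (a - I * b) * e * (c + I * d) =
  e * (a * c + b * d) + I * (e * (a * d - b * c)) - (I ^+ 2 + 1) * (e * b * d) by ring.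
by rewrite hI addNr mul0r subr0.
Qed.

Lemma bf_real k (A : 'M[C]_k) X Y : real_mx A -> real_mx X -> real_mx Y ->
  bf A X Y \is Num.real.
Proof.
move=> rA rX rY; rewrite bfE; apply: rpred_sum => i _; apply: rpred_sum => j _.
by rewrite !rpredM.
Qed.

Lemma bf_ge0 k (A : 'M[C]_k) X : pos_def A -> real_mx X -> 0 <= bf A X X.
Proof.
move=> pA rX; have [->|nz] := eqVneq X 0.
  by rewrite /bf mulmx0 mxE.
exact/ltW/pA.
Qed.

Lemma qf_pos k (A : 'M[C]_k) u : real_mx A -> pos_def A -> u != 0 ->
  0 < 'Re (qf A u).
Proof.
move=> rA pA nzu.
pose x := \col_i 'Re (u i 0); pose y := \col_i 'Im (u i 0).
have rx : real_mx x by move=> i j; rewrite mxE Creal_Re.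
have ry : real_mx y by move=> i j; rewrite mxE Creal_Im.
have -> : qf A u = (bf A x x + bf A y y) + 'i * (bf A x y - bf A y x).
  rewrite qfE !bfE -sumrB mulr_sumr -big_split -big_split /=; apply: eq_bigr => i _.
  rewrite -sumrB mulr_sumr -big_split -big_split /=; apply: eq_bigr => j _.
  rewrite [u i 0]Crect [u j 0]Crect conjC_rect ?Creal_Re ?Creal_Im //.
  rewrite scal_id ?sqrCi // !mxE; congr (_ + 'i * _); ring.
rewrite Re_rect; last 2 first.
- by rewrite rpredD ?bf_real.
- by rewrite rpredB ?bf_real.
have [x0|nzx] := eqVneq x 0.
  have nzy : y != 0.
    apply: contraNneq nzu => y0; apply/eqP/matrixP => i j; rewrite ord1 mxE.
    have := congr1 (fun M : 'cV[C]_k => M i 0) x0; have := congr1 (fun M : 'cV[C]_k => M i 0) y0.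
    rewrite !mxE => hy hx; by rewrite [u i 0]Crect hx hy mulr0 addr0.
  by rewrite x0 {1}/bf mulmx0 mxE add0r; apply: pA.
by rewrite ltr_pwDl ?bf_ge0 //; apply: pA.
Qed.

End Pos.
Section Spec.
Variable C : numClosedFieldType.
Local Notation ct P := (map_mx Num.Def.conjC (trmx P)).

Lemma qf_conj k (P M : 'M[C]_k) u : qf (ct P *m M *m P) u = qf M (P *m u).
Proof.
have h : (conjv u)^T *m ct P = (conjv (P *m u))^T.
  apply/matrixP => i j; rewrite !mxE rmorph_sum; apply: eq_bigr => l _.
  by rewrite !mxE rmorphM mulrC.
by rewrite /qf /bf -h !mulmxA.
Qed.

Lemma qf_diag k (D : 'rV[C]_k) y :
  qf (diag_mx D) y = \sum_i D 0 i * `|y i 0| ^+ 2.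
Proof.
rewrite qfE; apply: eq_bigr => i _.
rewrite (bigD1 i) //= big1 => [|j /negbTE nij]; last by rewrite !mxE eq_sym nij mulr0n mulr0 mul0r.
by rewrite addr0 !mxE eqxx mulr1n normCK; ring.
Qed.

Lemma qf1 k (y : 'cV[C]_k) : qf 1%:M y = \sum_i `|y i 0| ^+ 2.
Proof.
rewrite qfE; apply: eq_bigr => i _.
rewrite (bigD1 i) //= big1 => [|j /negbTE nij]; last by rewrite !mxE eq_sym nij mulr0n mulr0 mul0r.
by rewrite addr0 !mxE eqxx mulr1n normCK; ring.
Qed.

Lemma qf1_gt0 k (y : 'cV[C]_k) : y != 0 -> 0 < qf 1%:M y.
Proof.
move=> nzy; rewrite qf1 lt_def sumr_ge0 ?andbT => [|i _]; last exact: exprn_ge0.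
apply/eqP => /(psumr_eq0P (fun i _ => exprn_ge0 2 (normr_ge0 (y i 0)))) h.
move/eqP: nzy; apply; apply/matrixP => i j; rewrite ord1 mxE.
by have /eqP := h i isT; rewrite sqrf_eq0 normr_eq0 => /eqP.
Qed.

Lemma mem_eigs k (M : 'M[C]_k) z : (z \in eigs M) = root (char_poly M) z.
Proof.
rewrite /eigs; case: (closed_field_poly_normal _) => r hr /=.
by rewrite [in RHS]hr (monicP (char_poly_monic M)) scale1r root_prod_XsubC.
Qed.

Lemma eigenvalue_conj k (P N : 'M[C]_k) z : P \in unitmx ->
  eigenvalue (invmx P *m N *m P) z = eigenvalue N z.
Proof.
move=> uP; apply/eigenvalueP/eigenvalueP => [[v hv nzv]|[w hw nzw]].
  exists (v *m invmx P).
    have := congr1 (fun X => X *m invmx P) hv => /=.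
    by rewrite -scalemxAl !mulmxA mulmxK.
  by apply: contraNneq nzv => h; rewrite -(mulmxKV uP v) h mul0mx.
exists (w *m P).
  by rewrite !mulmxA mulmxK // hw scalemxAl.
by apply: contraNneq nzw => h; rewrite -(mulmxK uP w) h mul0mx.
Qed.

Lemma root_diag k (D : 'rV[C]_k) z :
  root (char_poly (diag_mx D)) z = [exists i, z == D 0 i].
Proof.
rewrite char_poly_trig ?diag_mx_is_trig //.
under eq_bigr => i _ do rewrite mxE eqxx mulr1n.
rewrite -(big_map (fun i => D 0 i) xpredT (fun a => 'X - a%:P)) root_prod_XsubC.
apply/mapP/existsP => [[i _ ->]|[i /eqP ->]]; first by exists i.
by exists i; rewrite ?mem_index_enum.
Qed.

Lemma eigs_spectral k (M : 'M[C]_k) z : M \is normalmx ->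
  (z \in eigs M) = [exists i, z == spectral_diag M 0 i].
Proof.
move=> /orthomx_spectralP hM.
rewrite mem_eigs -eigenvalue_root_char {1}hM eigenvalue_conj ?spectral_unit //.
by rewrite eigenvalue_root_char root_diag.
Qed.

End Spec.
Section Spec2.
Variable C : numClosedFieldType.
Local Notation ct P := (map_mx Num.Def.conjC (trmx P)).

Lemma spec_qf k (M : 'M[C]_k) u : M \is normalmx ->
  qf M u = \sum_i spectral_diag M 0 i * `|(spectralmx M *m u) i 0| ^+ 2 /\
  qf 1%:M u = \sum_i `|(spectralmx M *m u) i 0| ^+ 2.
Proof.
move=> /orthomx_spectralP hM; have uP := spectral_unitarymx M.
split; first by rewrite {1}hM invmx_unitary // qf_conj qf_diag.
have -> : (1%:M : 'M[C]_k) = ct (spectralmx M) *m 1%:M *m spectralmx M.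
  by rewrite mulmx1 -[ct _ *m _]mul1mx mulmxA mulmxKtV.
by rewrite (qf_conj (spectralmx M) 1%:M u) qf1.
Qed.

Lemma spec_norm_bound k (M : 'M[C]_k) u r : M \is normalmx ->
  (forall i, `|spectral_diag M 0 i| <= r) -> `|qf M u| <= r * qf 1%:M u.
Proof.
move=> nM hr; have [-> ->] := spec_qf u nM.
rewrite mulr_sumr; apply: le_trans (ler_norm_sum _ _ _) _.
apply: ler_sum => i _; rewrite normrM [X in _ * X]ger0_norm ?exprn_ge0 //.
by rewrite ler_wpM2r ?exprn_ge0.
Qed.

Lemma spec_lower k (M : 'M[C]_k) u L : M \is normalmx ->
  (forall i, L <= spectral_diag M 0 i) -> L * qf 1%:M u <= qf M u.
Proof.
move=> nM hL; have [-> ->] := spec_qf u nM.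
rewrite mulr_sumr; apply: ler_sum => i _.
by rewrite ler_wpM2r ?exprn_ge0.
Qed.

Lemma diag_le_rho k (M : 'M[C]_k) i : M \is normalmx ->
  `|spectral_diag M 0 i| <= spectral_radius M.
Proof.
move=> nM; have [_ h] := bigmax_norm (eigs M); apply: h.
by rewrite eigs_spectral //; apply/existsP; exists i.
Qed.

End Spec2.
Section HS.
Variable C : numClosedFieldType.
Local Notation ct P := (map_mx Num.Def.conjC (trmx P)).

Lemma real_half : (2^-1 : C) \is Num.real.
Proof. by rewrite rpredV realn. Qed.

Lemma H_herm k (A : 'M[C]_k) : real_mx A -> symm_part A \is hermsymmx.
Proof.
move=> rA; apply/is_hermitianmxP; rewrite expr0 scale1r.
apply/matrixP => i j; rewrite !mxE rmorphM rmorphD /=.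
by rewrite (conj_Creal real_half) (conj_Creal (rA i j)) (conj_Creal (rA j i)) addrC.
Qed.

Lemma S_normal k (A : 'M[C]_k) : real_mx A -> skew_part A \is normalmx.
Proof.
move=> rA; have h : ct (skew_part A) = - skew_part A.
  apply/matrixP => i j; rewrite !mxE rmorphM rmorphB /=.
  rewrite (conj_Creal real_half) (conj_Creal (rA i j)) (conj_Creal (rA j i)).
  by rewrite -mulrN opprB.
by apply/normalmxP; rewrite h mulmxN mulNmx.
Qed.

Lemma qf_H k (A : 'M[C]_k) u : real_mx A -> qf (symm_part A) u = 'Re (qf A u).
Proof.
move=> rA; rewrite /symm_part scalerDr qf_lin qf_tr // ReE; by field.
Qed.

Lemma qf_S k (A : 'M[C]_k) u : real_mx A -> qf (skew_part A) u = 'i * 'Im (qf A u).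
Proof.
move=> rA; rewrite /skew_part scalerBr -scaleNr qf_lin qf_tr // ImE.
have hi : 'i * 'i = -1 :> C by rewrite -expr2 sqrCi.
rewrite !mulrA hi; by field.
Qed.

Lemma lH_le k (A : 'M[C]_k) i : real_mx A ->
  lambda_min (symm_part A) <= spectral_diag (symm_part A) 0 i.
Proof.
move=> rA; have hH := H_herm rA; have nH := hermitian_normalmx hH.
have rD := hermitian_spectral_diag_real hH.
have reig : forall z, z \in eigs (symm_part A) -> z \is Num.real.
  move=> z; rewrite eigs_spectral // => /existsP [j /eqP ->].
  exact: (mxOverP rD).
have rd : head 0 (eigs (symm_part A)) \is Num.real.
  by case E: (eigs _) => [|a s] //=; apply: reig; rewrite E mem_head.
have [_ h] := bigmin_le rd reig; apply: h.
by rewrite eigs_spectral //; apply/existsP; exists i.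
Qed.

Lemma diag_pos k (A : 'M[C]_k) i : real_mx A -> pos_def A ->
  0 < spectral_diag (symm_part A) 0 i.
Proof.
move=> rA pA; have hH := H_herm rA; have nH := hermitian_normalmx hH.
set P := spectralmx (symm_part A).
have uP : P \is unitarymx by apply: spectral_unitarymx.
pose e : 'cV[C]_k := delta_mx i 0.
have he : P *m (ct P *m e) = e by rewrite mulmxA (unitarymxP uP) mul1mx.
have nze : ct P *m e != 0.
  apply: contraTneq isT => h0; move: he; rewrite h0 mulmx0 => /matrixP /(_ i 0).
  by rewrite !mxE !eqxx => /eqP; rewrite eq_sym oner_eq0.
have := qf_pos rA pA nze; rewrite -qf_H //.
have [-> _] := spec_qf (ct P *m e) nH; rewrite -/P he.
rewrite (bigD1 i) //= big1 => [|j nij]; last by rewrite !mxE (negbTE nij) normr0 expr0n mulr0.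
by rewrite !mxE !eqxx normr1 expr1n mulr1 addr0.
Qed.

Lemma lH_pos k (A : 'M[C]_k) : real_mx A -> pos_def A -> (0 < k)%N ->
  0 < lambda_min (symm_part A).
Proof.
move=> rA pA k0; have hH := H_herm rA; have nH := hermitian_normalmx hH.
have peig : forall z, z \in eigs (symm_part A) -> 0 < z.
  move=> z; rewrite eigs_spectral // => /existsP [j /eqP ->].
  exact: diag_pos.
have : spectral_diag (symm_part A) 0 (Ordinal k0) \in eigs (symm_part A).
  by rewrite eigs_spectral //; apply/existsP; exists (Ordinal k0).
rewrite /lambda_min; case E: (eigs _) => [|a s] //= _.
apply: bigmin_gt0 => [|z hz]; apply: peig; rewrite E //; exact: mem_head.
Qed.

Lemma qf_bounds k (A : 'M[C]_k) u : real_mx A -> pos_def A -> u != 0 ->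
  [/\ lambda_min (symm_part A) * qf 1%:M u <= 'Re (qf A u),
      'Re (qf A u) <= spectral_radius (symm_part A) * qf 1%:M u
    & `|'Im (qf A u)| <= spectral_radius (skew_part A) * qf 1%:M u].
Proof.
move=> rA pA nzu; have hH := H_herm rA; have nH := hermitian_normalmx hH.
have nS := S_normal rA.
split.
- by rewrite -qf_H //; apply: spec_lower => // i; apply: lH_le.
- apply: le_trans (real_ler_norm (Creal_Re _)) _.
  by rewrite -qf_H //; apply: spec_norm_bound => // i; apply: diag_le_rho.
- have -> : `|'Im (qf A u)| = `|qf (skew_part A) u|.
    by rewrite qf_S // normrM normCi mul1r.
  by apply: spec_norm_bound => // i; apply: diag_le_rho.
Qed.

End HS.
Section Arith.
Variable C : numClosedFieldType.

Lemma divle (p q d1 d2 : C) : 0 <= p -> p <= q -> 0 < d1 -> d1 <= d2 ->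
  p / d2 <= q / d1.
Proof.
move=> p0 pq d10 d12; have d20 : 0 < d2 := lt_le_trans d10 d12.
apply: le_trans (_ : p / d1 <= _).
  by rewrite ler_wpM2l // lef_pV2 // posrE.
by rewrite ler_wpM2r // invr_ge0 ltW.
Qed.

Lemma sqle (a b : C) : 0 <= a -> a <= b -> a ^+ 2 <= b ^+ 2.
Proof. by move=> a0 ab; rewrite !expr2 ler_pM. Qed.

Lemma arith (al lH rH rS h s x y : C) :
  s \is Num.real -> 0 <= al -> 0 < lH -> lH <= h -> h <= rH -> `|s| <= rS ->
  x * (al + 2 * h) - 2 * y * s = h -> 2 * x * s + y * (al + 2 * h) = s ->
  [/\ lH * (al + 2 * lH) / ((al + 2 * rH) ^+ 2 + 4 * rS ^+ 2) <= x,
      x <= (rH * (al + 2 * rH) + 2 * rS ^+ 2) / (al + 2 * lH) ^+ 2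
    & `|y| <= al * rS / (al + 2 * lH) ^+ 2].
Proof.
move=> rs al0 lH0 lHh hrH srS e1 e2.
set c := al + 2 * h.
have h0 : 0 < h := lt_le_trans lH0 lHh.
have c0 : 0 < c by rewrite /c ltr_wpDl // mulr_gt0.
have cl : al + 2 * lH <= c by rewrite /c lerD2l ler_wpM2l.
have cr : c <= al + 2 * rH by rewrite /c lerD2l ler_wpM2l.
have l0 : 0 < al + 2 * lH by rewrite ltr_wpDl // mulr_gt0.
set D := c ^+ 2 + 4 * s ^+ 2.
have s2 : 0 <= s ^+ 2 by rewrite -real_normK // exprn_ge0.
have s2r : s ^+ 2 <= rS ^+ 2 by rewrite -real_normK // sqle.
have c2D : c ^+ 2 <= D by rewrite /D lerDl mulr_ge0.
have D0 : 0 < D := lt_le_trans (exprn_gt0 2 c0) c2D.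
have l2 : (al + 2 * lH) ^+ 2 <= D := le_trans (sqle (ltW l0) cl) c2D.
have l20 : 0 < (al + 2 * lH) ^+ 2 by rewrite exprn_gt0.
have xD : x = (c * h + 2 * s ^+ 2) / D.
  apply: (mulIf (lt0r_neq0 D0)); rewrite mulfVK ?lt0r_neq0 //.
  apply/eqP; rewrite -subr_eq0.
  have -> : x * D - (c * h + 2 * s ^+ 2) =
    c * (x * c - 2 * y * s - h) + 2 * s * (2 * x * s + y * c - s) by rewrite /D; ring.
  by rewrite e1 e2 !subrr !mulr0 addr0.
have yD : y = al * s / D.
  apply: (mulIf (lt0r_neq0 D0)); rewrite mulfVK ?lt0r_neq0 //.
  apply/eqP; rewrite -subr_eq0.
  have -> : y * D - al * s =
    c * (2 * x * s + y * c - s) - 2 * s * (x * c - 2 * y * s - h) by rewrite /D /c; ring.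
  by rewrite e1 e2 !subrr !mulr0 subr0.
split.
- rewrite xD (mulrDl (c * h)); apply: le_trans (_ : c * h / D <= _).
    have p0 : 0 <= lH * (al + 2 * lH) := mulr_ge0 (ltW lH0) (ltW l0).
    have pq : lH * (al + 2 * lH) <= c * h by rewrite mulrC ler_pM ?(ltW lH0) ?(ltW l0).
    have DE : D <= (al + 2 * rH) ^+ 2 + 4 * rS ^+ 2.
      by rewrite /D lerD ?sqle ?(ltW c0) // ler_wpM2l.
    exact: divle p0 pq D0 DE.
  rewrite lerDl; apply: mulr_ge0; [exact: mulr_ge0 | by rewrite invr_ge0 ltW].
- rewrite xD; apply: divle => //.
  + by rewrite addr_ge0 // mulr_ge0 // ltW.
  + apply: lerD; last by rewrite ler_wpM2l.
    rewrite [X in _ <= X]mulrC; apply: ler_pM => //; exact: ltW.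
- rewrite yD normrM [`|D^-1|]ger0_norm ?invr_ge0 ?(ltW D0) // normrM (ger0_norm al0).
  apply: divle => //; first by rewrite mulr_ge0.
  by rewrite ler_wpM2l.
Qed.

End Arith.
Section Main.
Variable C : numClosedFieldType.

Lemma conjvB m n (B : 'M[C]_(m, n)) (a : 'cV[C]_m) : real_mx B ->
  (conjv a)^T *m B = (conjv (B^T *m a))^T.
Proof.
move=> rB; apply/matrixP => i j; rewrite !mxE rmorph_sum; apply: eq_bigr => l _.
by rewrite !mxE rmorphM /= (conj_Creal (rB l j)) mulrC.
Qed.

Lemma qfM k (X : 'M[C]_k) u : ((conjv u)^T *m (X *m u)) 0 0 = qf X u.
Proof. by rewrite /qf /bf mulmxA. Qed.

Lemma qf1E k (y : 'cV[C]_k) : ((conjv y)^T *m y) 0 0 = qf 1%:M y.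
Proof. by rewrite /qf /bf mulmx1. Qed.

Lemma qf1_ge0 k (y : 'cV[C]_k) : 0 <= qf 1%:M y.
Proof. by rewrite qf1 sumr_ge0 // => i _; rewrite exprn_ge0. Qed.

Lemma qfZ k (X : 'M[C]_k) (c : C) u : qf (c *: X) u = c * qf X u.
Proof.
have := qf_lin X 0 c 0 u; rewrite scale0r addr0 => ->.
by rewrite mul0r addr0.
Qed.

Lemma mxDE p q (X Y : 'M[C]_(p, q)) i j : (X + Y) i j = X i j + Y i j.
Proof. by rewrite mxE. Qed.
Lemma mx0E p q i j : (0 : 'M[C]_(p, q)) i j = 0.
Proof. by rewrite mxE. Qed.
Lemma mxZE p q (c : C) (X : 'M[C]_(p, q)) i j : (c *: X) i j = c * X i j.
Proof. by rewrite mxE. Qed.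

Lemma P_unit m n (A : 'M[C]_m) (B : 'M[C]_(m, n)) (al be : C) :
  real_mx A -> real_mx B -> pos_def A -> 0 <= al -> 0 < be ->
  P_MGSSP al be A B \in unitmx.
Proof.
move=> rA rB pA al0 be0; rewrite -unitmx_tr unitmxE unitfE; apply/negP.
move=> /det0P [z nzz hz].
have hz' : P_MGSSP al be A B *m z^T = 0 by rewrite -[LHS]trmxK trmx_mul trmxK hz trmx0.
move: hz'; rewrite -[z^T]vsubmxK /P_MGSSP mul_block_col.
set a := usubmx z^T; set b := dsubmx z^T.
move=> /eqP; rewrite -[X in _ == X]col_mx0 => /eqP /eq_col_mx [e1 e2].
have hb : b = (2 / be) *: (B^T *m a).
  move/eqP: e2; rewrite addrC addr_eq0 mul_scalar_mx => /eqP e2.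
  rewrite -[b](scalerK (lt0r_neq0 be0)) e2 mulNmx opprK -scalemxAl.
  by rewrite scalerA mulrC.
have t3 : (conjv a)^T *m (2 *: B *m ((2 / be) *: (B^T *m a))) =
    (2 * (2 / be)) *: ((conjv (B^T *m a))^T *m (B^T *m a)).
  by rewrite -scalemxAl -!scalemxAr scalerA mulmxA (conjvB _ rB).
have ha : a = 0.
  apply: contraTeq isT => nza.
  have := congr1 (fun X => ((conjv a)^T *m X) 0 0) e1 => /=.
  rewrite mulmxDr mulmxDl mulmxDr hb t3 mulmx0 !mxDE mx0E mxZE qf1E !qfM.
  rewrite -[al%:M]scalemx1 !qfZ.
  set N := qf 1%:M a; set q := qf 1%:M (B^T *m a) => e.
  have N0 : 0 <= N by apply: qf1_ge0.
  have q0 : 0 <= q by apply: qf1_ge0.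
  have c0 : 0 <= 2 * (2 / be) by rewrite mulr_ge0 ?divr_ge0 ?ler0n ?(ltW be0).
  have hq : qf A a = - (al * N + 2 * (2 / be) * q) / 2.
    have two0 : (2 : C) != 0 by rewrite pnatr_eq0.
    apply: (mulIf two0); rewrite mulfVK //; apply/eqP; rewrite -subr_eq0 -[X in _ == X]e.
    by apply/eqP; ring.
  have s0 : 0 <= al * N + 2 * (2 / be) * q by rewrite addr_ge0 // mulr_ge0.
  have rq : qf A a \is Num.real.
    by rewrite hq rpredM ?rpredN ?rpredV ?realn // realE s0.
  have := qf_pos rA pA nza; rewrite (Creal_ReP _ rq) hq.
  rewrite pmulr_lgt0 ?invr_gt0 ?ltr0n // oppr_gt0 => h.
  by have := lt_le_trans h s0; rewrite ltxx.
have hb0 : b = 0 by rewrite hb ha mulmx0 scaler0.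
move/eqP: nzz; apply; apply: trmx_inj; rewrite trmx0 -[z^T]vsubmxK -/a -/b ha hb0.
exact: col_mx0.
Qed.

End Main.
Section Final.
Variable C : numClosedFieldType.

Lemma cmul (I x y c d : C) : I ^+ 2 = -1 ->
  (x + I * y) * (c + I * d) = (x * c - y * d) + I * (x * d + y * c).
Proof.
move=> hI.
have -> : (x + I * y) * (c + I * d) =
  (x * c - y * d) + I * (x * d + y * c) + (I ^+ 2 + 1) * (y * d) by ring.
by rewrite hI addNr mul0r addr0.
Qed.

Lemma bounds_v0 m (A : 'M[C]_m) (al lam : C) (u : 'cV[C]_m) :
  real_mx A -> pos_def A -> 0 <= al -> u != 0 ->
  A *m u = lam *: ((al%:M + 2 *: A) *m u) ->
  let lH := lambda_min (symm_part A) in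
  let rH := spectral_radius (symm_part A) in
  let rS := spectral_radius (skew_part A) in
  [/\ lH * (al + 2 * lH) / ((al + 2 * rH) ^+ 2 + 4 * rS ^+ 2) <= 'Re lam,
      'Re lam <= (rH * (al + 2 * rH) + 2 * rS ^+ 2) / (al + 2 * lH) ^+ 2
    & `|'Im lam| <= al * rS / (al + 2 * lH) ^+ 2].
Proof.
move=> rA pA al0 nzu hE lH rH rS.
have e := congr1 (fun X => ((conjv u)^T *m X) 0 0) hE.
rewrite /= qfM -scalemxAr mxZE qfM -[al%:M]scalemx1 qf_lin in e.
set a := qf A u in e; set N := qf 1%:M u in e.
have N0 : 0 < N by apply: qf1_gt0.
have Nn0 : N != 0 by rewrite lt0r_neq0.
have rN : N \is Num.real by rewrite realE ltW.
have m0 : (0 < m)%N.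
  case: m A u rA pA nzu {hE e lH rH rS a N N0 Nn0 rN} => // A u _ _.
  by rewrite [u]flatmx0 eqxx.
have lH0 : 0 < lH by apply: lH_pos.
have [b1 b2 b3] := qf_bounds rA pA nzu; rewrite -/a -/N in b1 b2 b3.
set h := 'Re a / N; set s := 'Im a / N.
have rh : h \is Num.real by rewrite rpredM ?rpredV // Creal_Re.
have rs : s \is Num.real by rewrite rpredM ?rpredV // Creal_Im.
have lHh : lH <= h by rewrite ler_pdivlMr.
have hrH : h <= rH by rewrite ler_pdivrMr.
have srS : `|s| <= rS.
  by rewrite normrM [`|N^-1|]ger0_norm ?invr_ge0 ?(ltW N0) // ler_pdivrMr.
have e' : lam * ((al + 2 * h) + 'i * (2 * s)) = h + 'i * s.
  have ha : a = N * (h + 'i * s).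
    rewrite /h /s [a in LHS]Crect; by field.
  apply: (mulfI Nn0); rewrite -ha [in RHS]e ha; by field.
rewrite [lam in lam * _]Crect cmul ?sqrCi // in e'.
set x := 'Re lam in e' *; set y := 'Im lam in e' *.
have rx : x \is Num.real by apply: Creal_Re.
have ry : y \is Num.real by apply: Creal_Im.
have rc : al + 2 * h \is Num.real.
  by apply: rpredD; [exact: ger0_real | rewrite rpredM ?realn].
have r2s : 2 * s \is Num.real by rewrite rpredM ?realn.
have eRe := congr1 (@Num.Theory.Re _) e'.
have eIm := congr1 (@Num.Theory.Im _) e'.
have r1 : x * (al + 2 * h) - y * (2 * s) \is Num.real.
  exact: rpredB (rpredM rx rc) (rpredM ry r2s).
have r2 : x * (2 * s) + y * (al + 2 * h) \is Num.real.
  exact: rpredD (rpredM rx r2s) (rpredM ry rc).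
rewrite !Re_rect // in eRe.
rewrite !Im_rect // in eIm.
apply: (arith rs al0 lH0 lHh hrH srS).
- by rewrite -[in RHS]eRe; ring.
- by rewrite -[in RHS]eIm; ring.
Qed.

End Final.
Unset Implicit Arguments.
Lemma conjv0 (C : numClosedFieldType) k : conjv (0 : 'cV[C]_k) = 0.
Proof. by apply/matrixP => i j; rewrite !mxE conjC0. Qed.

Theorem theorem5p1 (C : numClosedFieldType) (m n : nat)
  (A : 'M[C]_m) (B : 'M[C]_(m, n)) (alpha beta : C)
  (lambda : C) (w : 'cV[C]_(m + n)) :
  real_mx A -> real_mx B -> pos_def A -> (n <= m)%N ->
  0 <= alpha -> 0 < beta ->
  w != 0 ->
  invmx (P_MGSSP alpha beta A B) *m saddle_mx A B *m w = lambda *: w ->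
  let u := usubmx w in
  let lH := lambda_min (symm_part A) in
  let rH := spectral_radius (symm_part A) in
  let rS := spectral_radius (skew_part A) in
  let bounds :=
    [/\ lH * (alpha + 2 * lH) / ((alpha + 2 * rH) ^+ 2 + 4 * rS ^+ 2) <= 'Re lambda,
        'Re lambda <= (rH * (alpha + 2 * rH) + 2 * rS ^+ 2) / (alpha + 2 * lH) ^+ 2
      & `|'Im lambda| <= alpha * rS / (alpha + 2 * lH) ^+ 2] in
  [/\ (\rank B = n -> B^T *m u = 0 -> bounds),
      ((\rank B < n)%N -> u = 0 -> lambda = 0)
    & ((\rank B < n)%N -> B^T *m u = 0 -> lambda = 0 \/ bounds)].
Proof.
move=> rA rB pA nm al0 be0 nzw heig u lH rH rS bounds.
have uP := P_unit rA rB pA al0 be0.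
have hM := congr1 (mulmx (P_MGSSP alpha beta A B)) heig.
rewrite /= -!mulmxA mulKVmx // -scalemxAr in hM.
set v := dsubmx w.
have wE : w = col_mx u v by rewrite vsubmxK.
rewrite wE /saddle_mx /P_MGSSP !mul_block_col scale_col_mx in hM.
case/eq_col_mx: hM => E1 E2.
have keyv : B^T *m u = 0 -> lambda = 0 \/ v = 0.
  move=> hBu; move: E2.
  rewrite mulNmx hBu oppr0 mul0mx addr0 mulNmx -scalemxAl hBu scaler0 oppr0 add0r.
  rewrite mul_scalar_mx scalerA => /esym/eqP; rewrite scalemx_eq0 mulf_eq0.
  rewrite (negbTE (lt0r_neq0 be0)) orbF => /orP[/eqP->|/eqP->]; by [left|right].
have v0b : v = 0 -> bounds.
  move=> v0; rewrite v0 !mulmx0 !addr0 in E1.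
  apply: (bounds_v0 rA pA al0 _ E1).
  by apply: contraNneq nzw => u0; rewrite wE u0 v0 col_mx0.
split.
- move=> rk hBu; case: (keyv hBu) => [l0|]; last exact: v0b.
  exfalso; move: E1; rewrite l0 scale0r => E1.
  have u0 : u = 0.
    apply/eqP; apply: contraTT isT => nzu.
    have := congr1 (fun X => ((conjv u)^T *m X) 0 0) E1.
    rewrite /= mulmxDr mxDE qfM mulmxA (conjvB _ rB) hBu conjv0 trmx0 mul0mx.
    rewrite mulmx0 !mx0E addr0 => h0.
    by have := qf_pos rA pA nzu; rewrite h0 (Creal_ReP _ (rpred0 _)) ltxx.
  move: E1; rewrite u0 mulmx0 add0r => Bv.
  have v0 : v = 0.
    have rf : row_free B^T by rewrite /row_free mxrank_tr rk.
    apply: trmx_inj; rewrite trmx0; apply/eqP.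
    by rewrite -(mulmx_free_eq0 _ rf) -trmx_mul Bv trmx0.
  by move/eqP: nzw; apply; rewrite wE u0 v0 col_mx0.
- move=> _ u0; case: (keyv _) => [|//|v0]; first by rewrite u0 mulmx0.
  by move/eqP: nzw; rewrite wE u0 v0 col_mx0.
- move=> _ hBu; case: (keyv hBu) => [l0|v0]; [by left | by right; apply: v0b].
Qed.
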